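(* Let $j,r\in\mathbb{N}$. Then for all $n\in\mathbb{N}$: $c_j^{(r-1)}(n)\le c_j^{(r)}(n)$; in particular $c_j(n)\le c_j^{(r)}(n)$; and moreover $c_j^{(r)}(n)\le d_{j+r}(n)$.
   Context: For $j,n\in\mathbb{N}$, $d_j(n)$ is the number of ordered $j$-tuples of positive integers with product $n$, and $c_j(n)$ is the number of ordered $j$-tuples of integers each $\ge 2$ with product $n$. The associated divisor functions are defined by $c_j^{(0)}=c_j$ and $c_j^{(r)}(n)=\sum_{m\mid n}c_j^{(r-1)}(m)$ for $r,n\in\mathbb{N}$. *)

(* Defs.v *)
From mathcomp Require Import all_boot.
Set Implicit Arguments. Unset Strict Implicit. Unset Printing Implicit Defensive.

(* d_j(n): number of ordered j-tuples of positive integers with product n.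
   Every entry of such a tuple divides n, hence lies in {0,...,n}, so we
   count j-tuples over 'I_n.+1 with positive entries and product n. *)
Definition dfun (j n : nat) : nat :=
  #|[set t : j.-tuple 'I_n.+1 |
      all (fun x : 'I_n.+1 => 0 < val x) t && (\prod_(x <- t) val x == n)]|.

Definition cfun (j n : nat) : nat :=
  #|[set t : j.-tuple 'I_n.+1 |
      all (fun x : 'I_n.+1 => 1 < val x) t && (\prod_(x <- t) val x == n)]|.

Fixpoint cfunr (j r n : nat) : nat :=
  match r with
  | 0 => cfun j n
  | r'.+1 => \sum_(m <- divisors n) cfunr j r' m
  end.

(* Main.v *)
Require Import Defs.
From mathcomp Require Import all_boot.
From mathcomp Require Import zify.

Definition G (k N n : nat) : nat :=
  \sum_(t : k.-tuple 'I_N)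
     (all (fun x : 'I_N => 0 < val x) t && (\prod_(x <- t) val x == n)).

Fixpoint D (k n : nat) : nat :=
  match k with
  | 0 => (n == 1 : nat)
  | k'.+1 => \sum_(d <- divisors n) D k' d
  end.

Lemma sum_tuple_cons (T : finType) k (F : k.+1.-tuple T -> nat) :
  \sum_(t : k.+1.-tuple T) F t =
  \sum_(x : T) \sum_(t : k.-tuple T) F [tuple of x :: t].
Proof.
rewrite pair_big /=.
rewrite (reindex (fun p : T * k.-tuple T => [tuple of p.1 :: p.2])) //=.
exists (fun t : k.+1.-tuple T => (thead t, [tuple of behead t])).
  case=> x t _ /=; congr (_, _); exact: val_inj.
move=> t _; apply: val_inj => /=.
by case: t => [[|a s] //= _].
Qed.

Lemma G0 N n : G 0 N n = (n == 1).
Proof.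
rewrite /G (eq_bigr (fun _ => (1 == n : nat))); last first.
  by move=> t _; rewrite tuple0 big_nil.
by rewrite sum_nat_const card_tuple expn0 mul1n eq_sym.
Qed.

Lemma GS k N n : 0 < n ->
  G k.+1 N n = \sum_(x : 'I_N) ((0 < val x) && (val x %| n)) * G k N (n %/ x).
Proof.
move=> n0; rewrite /G sum_tuple_cons; apply: eq_bigr => x _.
rewrite big_distrr /=; apply: eq_bigr => t _.
rewrite big_cons.
case: (ltnP 0 x) => x0 /=; last by [].
case dx: (val x %| n) => /=.
  by rewrite mul1n eqn_div // mulnC.
rewrite mul0n; case: eqP => [h|_]; last by rewrite andbF.
by move: dx; rewrite -h dvdn_mulr.
Qed.

Lemma divs_perm n N : 0 < n -> n < N ->
  perm_eq (map (fun x => n %/ x) [seq x <- index_iota 0 N | (0 < x) && (x %| n)])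
          (divisors n).
Proof.
move=> n0 nN; rewrite /index_iota subn0; apply: uniq_perm.
- rewrite map_inj_in_uniq ?filter_uniq ?iota_uniq //.
  move=> x y; rewrite !mem_filter => /andP[/andP[x0 dx] _] /andP[/andP[y0 dy] _] e.
  have h1 := divnK dx; have h2 := divnK dy.
  have q0 : 0 < n %/ x by rewrite divn_gt0 // dvdn_leq.
  apply/eqP; rewrite -(eqn_pmul2l q0); apply/eqP.
  by rewrite h1 e h2.
- exact: divisors_uniq.
move=> m; rewrite -dvdn_divisors //; apply/mapP/idP.
  case=> x; rewrite mem_filter => /andP[/andP[x0 dx] _] ->.
  exact: dvdn_div.
move=> dm; have m0 : 0 < m by apply: dvdn_gt0 dm.
exists (n %/ m).
  rewrite mem_filter mem_iota /= add0n dvdn_div // divn_gt0 // dvdn_leq //=.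
  by apply: leq_ltn_trans nN; apply: leq_div.
by rewrite divnA // mulKn.
Qed.

Lemma sum_ord_div N n (F : nat -> nat) :
  \sum_(x : 'I_N) ((0 < val x) && (val x %| n)) * F (n %/ x) =
  \sum_(0 <= x < N | (0 < x) && (x %| n)) F (n %/ x).
Proof.
rewrite big_mkord [RHS]big_mkcond /=.
by apply: eq_bigr => x _; case: ifP => _; rewrite ?mul1n ?mul0n.
Qed.

Lemma GD k N n : 0 < n -> n < N -> G k N n = D k n.
Proof.
elim: k n => [|k IH] n n0 nN; first by rewrite G0.
rewrite GS // /=.
have -> : \sum_(x : 'I_N) ((0 < val x) && (val x %| n)) * G k N (n %/ x) =
          \sum_(x : 'I_N) ((0 < val x) && (val x %| n)) * D k (n %/ x).
  apply: eq_bigr => x _; case: (ltnP 0 x) => x0 //=.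
  case dx: (val x %| n) => //=; rewrite !mul1n IH //.
    by rewrite divn_gt0 // dvdn_leq.
  by apply: leq_ltn_trans nN; apply: leq_div.
rewrite sum_ord_div -big_filter.
rewrite -(big_map (fun x => n %/ x) xpredT (D k)).
by apply: perm_big; apply: divs_perm.
Qed.

Lemma dfunD k n : 0 < n -> dfun k n = D k n.
Proof.
move=> n0; rewrite -(@GD k n.+1 n n0 (ltnSn n)) /dfun /G -sum1_card big_mkcond /=.
by apply: eq_bigr => t _; rewrite inE; case: ifP.
Qed.

Lemma cfun_le_dfun k n : cfun k n <= dfun k n.
Proof.
apply: subset_leq_card; apply/subsetP => t; rewrite !inE => /andP[/allP h ->].
by rewrite andbT; apply/allP => x /h; apply: ltnW.
Qed.

Lemma cfunr_mono j r n : 0 < n -> cfunr j r n <= cfunr j r.+1 n.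
Proof.
move=> n0 /=; rewrite (big_rem n) ?divisors_id //=; exact: leq_addr.
Qed.

Lemma cfun_le_cfunr j r n : 0 < n -> cfun j n <= cfunr j r n.
Proof.
move=> n0; elim: r => [//|r IH]; exact: leq_trans IH (@cfunr_mono j r n n0).
Qed.

Lemma cfunr_le_D j r n : 0 < n -> cfunr j r n <= D (j + r) n.
Proof.
elim: r n => [|r IH] n n0; first by rewrite addn0 -dfunD // cfun_le_dfun.
rewrite addnS /= !big_seq; apply: leq_sum => m; rewrite -dvdn_divisors // => dm.
by apply: IH; apply: dvdn_gt0 n0 dm.
Qed.

Theorem lemma16 (j r : nat) (hj : 0 < j) (hr : 0 < r) :
  forall n : nat, 0 < n ->
    [/\ cfunr j r.-1 n <= cfunr j r n,
        cfun j n <= cfunr j r n &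
        cfunr j r n <= dfun (j + r) n].
Proof.
move=> n n0; split.
- by case: r hr => // r _; exact: cfunr_mono.
- exact: cfun_le_cfunr.
- by rewrite dfunD //; exact: cfunr_le_D.
Qed.
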